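(* Let $u\equiv0$ and assume $\mathcal R_0<1$. Then $\mathbf 0\in\mathbb R^4$ is globally asymptotically stable in $\mathcal D'=[0,+\infty)^4$ for the system $$\dot E=\beta_E F\Big(1-\frac EK\Big)-(\nu_E+\delta_E)E,\quad \dot M=(1-\nu)\nu_E E-\delta_M M,\quad \dot F=\nu\nu_E E\frac{M}{M+\gamma_sM_s}-\delta_F F,\quad \dot M_s=u-\delta_sM_s.$$
   Context: Parameters: $\beta_E,\nu_E,\delta_E,\delta_M,\delta_F,\delta_s,K>0$, $\nu\in(0,1)$, $\gamma_s\in(0,1]$, and $\delta_s\ge\delta_M$. $\mathcal R_0:=\dfrac{\beta_E\nu\nu_E}{\delta_F(\nu_E+\delta_E)}$. State $z=(E,M,F,M_s)^T\in\mathcal D'$. For a feedback $u:\mathcal D'\to[0,+\infty)$ with $u\in L^\infty_{loc}(\mathcal D')$, write $X(z)$ for the right-hand side above with $u=u(z)$ (its value on the null set $\{M=M_s=0\}$ is irrelevant). Solutions are Filippov solutions: locally Lipschitz curves $z:I\to\mathcal D'$ ($I$ an interval) such that for a.e. $t\in I$, $\dot z(t)\in\bigcap_{\varepsilon>0}\bigcap_{N}\overline{\mathrm{conv}}\,X\big(((z(t)+\varepsilon B)\cap\mathcal D')\setminus N\big)$, where $B$ is the unit ball of $\mathbb R^4$, $N$ ranges over Lebesgue-null subsets of $\mathbb R^4$, and $\overline{\mathrm{conv}}$ denotes the closed convex hull. For $\mathcal S\subset\mathcal D'$, an equilibrium $z_e$ is stable in $\mathcal S$ if for every $\varepsilon>0$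 there is $\delta>0$ such that every Filippov solution with $z(0)\in\mathcal S$ and $\|z(0)-z_e\|<\delta$ satisfies $\|z(t)-z_e\|<\varepsilon$ for all $t>0$; it is a global attractor in $\mathcal S$ if every Filippov solution with $z(0)\in\mathcal S$ satisfies $z(t)\to z_e$; it is globally asymptotically stable in $\mathcal S$ if both hold. *)

(* Defs.v *)
From Stdlib Require Import Reals.
Open Scope R_scope.

Record V4 := mk4 { cE : R; cM : R; cF : R; cMs : R }.

Definition vzero : V4 := mk4 0 0 0 0.
Definition vadd (x y : V4) : V4 :=
  mk4 (cE x + cE y) (cM x + cM y) (cF x + cF y) (cMs x + cMs y).
Definition vscale (a : R) (x : V4) : V4 :=
  mk4 (a * cE x) (a * cM x) (a * cF x) (a * cMs x).
Definition vsub (x y : V4) : V4 := vadd x (vscale (-1) y).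
Definition vnorm (x : V4) : R :=
  sqrt (cE x ^ 2 + cM x ^ 2 + cF x ^ 2 + cMs x ^ 2).

Definition Dp (z : V4) : Prop :=
  0 <= cE z /\ 0 <= cM z /\ 0 <= cF z /\ 0 <= cMs z.

Definition R0_basic (betaE nuE deltaE deltaF nu : R) : R :=
  betaE * nu * nuE / (deltaF * (nuE + deltaE)).

(** Right-hand side X(z) with feedback u.  At M = M_s = 0 the quotient
    M/(M + gamma_s M_s) evaluates to 0 (Stdlib's total division);
    this value is irrelevant (null set). *)
Definition Xfield (betaE nuE deltaE deltaM deltaF deltaS K nu gammaS : R)
    (u : V4 -> R) (z : V4) : V4 :=
  let E := cE z in let M := cM z in let F := cF z in let Ms := cMs z in
  mk4 (betaE * F * (1 - E / K) - (nuE + deltaE) * E)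
      ((1 - nu) * nuE * E - deltaM * M)
      (nu * nuE * E * (M / (M + gammaS * Ms)) - deltaF * F)
      (u z - deltaS * Ms).

Definition null1 (N : R -> Prop) : Prop :=
  forall eps, 0 < eps ->
    exists a b : nat -> R,
      (forall k, a k <= b k) /\
      (forall t, N t -> exists k, a k <= t <= b k) /\
      (forall n, sum_f_R0 (fun k => b k - a k) n <= eps).

Definition in_box (lo hi x : V4) : Prop :=
  cE lo <= cE x <= cE hi /\ cM lo <= cM x <= cM hi /\
  cF lo <= cF x <= cF hi /\ cMs lo <= cMs x <= cMs hi.
Definition box_vol (lo hi : V4) : R :=
  (cE hi - cE lo) * (cM hi - cM lo) * (cF hi - cF lo) * (cMs hi - cMs lo).
Definition null4 (N : V4 -> Prop) : Prop :=
  forall eps, 0 < eps ->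
    exists lo hi : nat -> V4,
      (forall k, cE (lo k) <= cE (hi k) /\ cM (lo k) <= cM (hi k) /\
                 cF (lo k) <= cF (hi k) /\ cMs (lo k) <= cMs (hi k)) /\
      (forall x, N x -> exists k, in_box (lo k) (hi k) x) /\
      (forall n, sum_f_R0 (fun k => box_vol (lo k) (hi k)) n <= eps).

Definition closed4 (C : V4 -> Prop) : Prop :=
  forall x, (forall e, 0 < e -> exists y, C y /\ vnorm (vsub y x) < e) -> C x.
Definition convex4 (C : V4 -> Prop) : Prop :=
  forall x y t, C x -> C y -> 0 <= t <= 1 ->
    C (vadd (vscale t x) (vscale (1 - t) y)).
Definition cl_conv_hull (S : V4 -> Prop) (v : V4) : Prop :=
  forall C, closed4 C -> convex4 C -> (forall w, S w -> C w) -> C v.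

Definition filippov_set (X : V4 -> V4) (z v : V4) : Prop :=
  forall eps, 0 < eps -> forall N, null4 N ->
    cl_conv_hull
      (fun w => exists y, Dp y /\ vnorm (vsub y z) < eps /\ ~ N y /\ w = X y) v.

Definition is_interval (I : R -> Prop) : Prop :=
  forall a b c, I a -> I c -> a <= b <= c -> I b.
Definition loc_lipschitz (I : R -> Prop) (z : R -> V4) : Prop :=
  forall t, I t -> exists d L, 0 < d /\
    forall s s', I s -> I s' -> Rabs (s - t) < d -> Rabs (s' - t) < d ->
      vnorm (vsub (z s) (z s')) <= L * Rabs (s - s').

Definition has_deriv (z : R -> V4) (t : R) (v : V4) : Prop :=
  derivable_pt_lim (fun s => cE (z s)) t (cE v) /\
  derivable_pt_lim (fun s => cM (z s)) t (cM v) /\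
  derivable_pt_lim (fun s => cF (z s)) t (cF v) /\
  derivable_pt_lim (fun s => cMs (z s)) t (cMs v).

(** Filippov solution on the interval I (values of z outside I are irrelevant). *)
Definition filippov_solution (X : V4 -> V4) (I : R -> Prop) (z : R -> V4) : Prop :=
  is_interval I /\
  (forall t, I t -> Dp (z t)) /\
  loc_lipschitz I z /\
  exists N, null1 N /\
    forall t, I t -> ~ N t ->
      exists v, has_deriv z t v /\ filippov_set X (z t) v.

Definition stable_in (X : V4 -> V4) (S : V4 -> Prop) (ze : V4) : Prop :=
  forall eps, 0 < eps -> exists d, 0 < d /\
    forall I z, filippov_solution X I z -> I 0 -> S (z 0) ->
      vnorm (vsub (z 0) ze) < d ->
      forall t, I t -> 0 < t -> vnorm (vsub (z t) ze) < eps.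

Definition global_attractor_in (X : V4 -> V4) (S : V4 -> Prop) (ze : V4) : Prop :=
  forall I z, filippov_solution X I z -> (forall t, 0 <= t -> I t) -> S (z 0) ->
    forall eps, 0 < eps -> exists T, forall t, T <= t ->
      vnorm (vsub (z t) ze) < eps.

Definition GAS_in (X : V4 -> V4) (S : V4 -> Prop) (ze : V4) : Prop :=
  stable_in X S ze /\ global_attractor_in X S ze.

(* Main.v *)
Require Import Defs.
From Stdlib Require Import Reals Lra Lia Psatz Classical.
Open Scope R_scope.

Lemma real_ind (a b : R) (S : R -> Prop) :
  a <= b -> S a ->
  (forall t, a <= t < b -> S t -> exists d, 0 < d /\ forall s, t < s <= t + d -> s <= b -> S s) ->
  (forall t, a < t <= b -> (forall s, a <= s < t -> S s) -> S t) ->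
  S b.
Proof.
  intros Hab Ha H2 H3.
  set (E := fun x => a <= x <= b /\ forall s, a <= s <= x -> S s).
  assert (HE: bound E) by (exists b; intros x [Hx _]; lra).
  assert (Ea: E a).
  { split; [lra|]. intros s Hs. replace s with a by lra. exact Ha. }
  assert (HEx: exists x, E x) by (exists a; exact Ea).
  destruct (completeness E HE HEx) as [c [Hub Hlub]].
  assert (Hac: a <= c) by (apply Hub; exact Ea).
  assert (Hcb: c <= b) by (apply Hlub; intros x [Hx _]; lra).
  assert (Hbelow: forall s, a <= s < c -> S s).
  { intros s Hs. destruct (classic (exists x, E x /\ s < x)) as [[x [[Hx1 Hx2] Hsx]]|Hn].
    - apply Hx2; lra.
    - exfalso. assert (c <= s); [|lra]. apply Hlub. intros x Ex.
      destruct (Rle_dec x s) as [h|h]; auto. exfalso; apply Hn; exists x; split; auto; lra. }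
  assert (Sc: S c).
  { destruct (Req_dec c a) as [e|e]. { rewrite e; exact Ha. } apply H3; [lra | auto]. }
  assert (Ec: E c).
  { split; [lra|]. intros s Hs. destruct (Req_dec s c) as [e|e]. { rewrite e; auto. } apply Hbelow; lra. }
  destruct (Req_dec c b) as [e|Hne]. { rewrite <- e; exact Sc. }
  exfalso. destruct (H2 c) as [d [Hd Hs]]; [lra| exact Sc|].
  set (c' := Rmin (c + d) b).
  assert (Hc'1: c' <= c + d) by (unfold c', Rmin; destruct Rle_dec; lra).
  assert (Hc'2: c' <= b) by (unfold c', Rmin; destruct Rle_dec; lra).
  assert (Hc'3: c < c') by (unfold c', Rmin; destruct Rle_dec; lra).
  assert (Ec': E c').
  { split; [lra|]. intros s Hs'. destruct (Rle_dec s c) as [h|h].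
    - apply (proj2 Ec). lra.
    - apply Hs; lra. }
  specialize (Hub c' Ec'). lra.
Qed.

Definition sloclip (I : R -> Prop) (g : R -> R) : Prop :=
  forall t, I t -> exists d L, 0 < d /\
    forall s s', I s -> I s' -> Rabs (s - t) < d -> Rabs (s' - t) < d ->
      Rabs (g s - g s') <= L * Rabs (s - s').

Definition lipon (a b L : R) (g : R -> R) : Prop :=
  forall x y, a <= x <= b -> a <= y <= b -> Rabs (g x - g y) <= L * Rabs (x - y).

Lemma lip_split a t s L1 L2 g : a <= t -> t <= s -> 0 <= L1 -> 0 <= L2 ->
  lipon a t L1 g -> lipon t s L2 g -> lipon a s (Rmax L1 L2) g.
Proof.
  intros Hat Hts H1 H2 La Lb.
  assert (M1: L1 <= Rmax L1 L2) by apply Rmax_l.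
  assert (M2: L2 <= Rmax L1 L2) by apply Rmax_r.
  assert (key: forall x y, a <= x <= s -> a <= y <= s -> x <= y ->
     Rabs (g x - g y) <= Rmax L1 L2 * Rabs (x - y)).
  { intros x y Hx Hy Hxy.
    rewrite (Rabs_left1 (x - y)) by lra.
    destruct (Rle_dec y t) as [h|h].
    - specialize (La x y ltac:(lra) ltac:(lra)). rewrite (Rabs_left1 (x-y)) in La by lra. nra.
    - destruct (Rle_dec t x) as [h'|h'].
      + specialize (Lb x y ltac:(lra) ltac:(lra)). rewrite (Rabs_left1 (x-y)) in Lb by lra. nra.
      + specialize (La x t ltac:(lra) ltac:(lra)). specialize (Lb t y ltac:(lra) ltac:(lra)).
        rewrite (Rabs_left1 (x-t)) in La by lra. rewrite (Rabs_left1 (t-y)) in Lb by lra.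
        assert (Rabs (g x - g y) <= Rabs (g x - g t) + Rabs (g t - g y)).
        { replace (g x - g y) with ((g x - g t) + (g t - g y)) by ring. apply Rabs_triang. }
        nra. }
  intros x y Hx Hy. destruct (Rle_dec x y) as [h|h].
  - apply key; auto.
  - rewrite Rabs_minus_sym. rewrite (Rabs_minus_sym x y). apply key; auto; lra.
Qed.

Lemma unif_lip (I : R -> Prop) g a b : a <= b -> (forall x, a <= x <= b -> I x) ->
  sloclip I g -> exists L, 0 <= L /\ lipon a b L g.
Proof.
  intros Hab HI Hg.
  apply (real_ind a b (fun t => exists L, 0 <= L /\ lipon a t L g)); auto.
  - exists 0. split; [lra|]. intros x y Hx Hy. replace x with a by lra. replace y with a by lra.
    rewrite Rminus_diag, Rabs_R0. lra.
  - intros t Ht [L [HL Hl]]. destruct (Hg t (HI t ltac:(lra))) as [d [Lt [Hd Hl2]]].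
    exists (d/2). split; [lra|]. intros s Hs Hsb.
    exists (Rmax L (Rmax Lt 0)). split. { eapply Rle_trans; [|apply Rmax_r]. apply Rmax_r. }
    apply lip_split with t; try lra.
    + apply Rmax_r.
    + assumption.
    + intros x y Hx Hy. eapply Rle_trans.
      * apply Hl2; [apply HI; lra|apply HI; lra| |].
        -- rewrite Rabs_right by lra. lra.
        -- rewrite Rabs_right by lra. lra.
      * apply Rmult_le_compat_r; [apply Rabs_pos|apply Rmax_l].
  - intros c Hc Hbelow. destruct (Hg c (HI c ltac:(lra))) as [d [Lc [Hd Hl2]]].
    set (t0 := Rmax a (c - d/2)).
    assert (T1: a <= t0) by apply Rmax_l.
    assert (T2: c - d/2 <= t0) by apply Rmax_r.
    assert (T3: t0 < c) by (unfold t0, Rmax; destruct Rle_dec; lra).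
    destruct (Hbelow t0 ltac:(lra)) as [L [HL Hl]].
    exists (Rmax L (Rmax Lc 0)). split. { eapply Rle_trans; [|apply Rmax_r]. apply Rmax_r. }
    apply lip_split with t0; try lra.
    + apply Rmax_r.
    + assumption.
    + intros x y Hx Hy. eapply Rle_trans.
      * apply Hl2; [apply HI; lra|apply HI; lra| |].
        -- rewrite Rabs_left1 by lra. lra.
        -- rewrite Rabs_left1 by lra. lra.
      * apply Rmult_le_compat_r; [apply Rabs_pos|apply Rmax_l].
Qed.


Lemma geom n : sum_f_R0 (fun k => (/2)^(S k)) n = 1 - (/2)^(S n).
Proof. induction n. simpl. field. change (sum_f_R0 (fun k => (/2)^(S k)) (S n)) with (sum_f_R0 (fun k => (/2)^(S k)) n + (/2)^(S (S n))). rewrite IHn. simpl. field. Qed.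

Lemma le_sum (u : nat -> R) k n : (forall j, 0 <= u j) -> (k <= n)%nat -> u k <= sum_f_R0 u n.
Proof.
  intros Hu Hk. induction n.
  - replace k with 0%nat by lia. simpl. lra.
  - simpl. destruct (Nat.eq_dec k (S n)) as [e|e].
    + subst. pose proof (cond_pos_sum u n Hu). lra.
    + pose proof (IHn ltac:(lia)). pose proof (Hu (S n)). lra.
Qed.

Lemma eps_conclude x y K : 0 <= K -> (forall e, 0 < e -> x <= y + K * e) -> x <= y.
Proof.
  intros HK H. destruct (Rle_dec x y) as [h|h]; auto. exfalso.
  set (e := (x - y) / (K + 1)).
  assert (He : e * (K + 1) = x - y) by (unfold e; field; lra).
  assert (Hpos: 0 < e) by (unfold e; apply Rdiv_lt_0_compat; lra).
  specialize (H e Hpos). nra.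
Qed.

Lemma mono_core g a b L N : a <= b -> 0 <= L -> lipon a b L g -> null1 N ->
  (forall t, a <= t <= b -> ~ N t -> exists d, derivable_pt_lim g t d /\ d <= 0) ->
  forall eps, 0 < eps -> g b - g a <= eps * (b - a + 2 * L + 1).
Proof.
  intros Hab HL Hlip HN Hder eps Heps.
  destruct (HN eps Heps) as [ak [bk [Hab' [Hcov Hsum]]]].
  set (Bk := fun k => bk k + eps * (/2)^(S k)).
  assert (Bpos: forall k, bk k < Bk k).
  { intro k. unfold Bk. assert (0 < (/2)^(S k)) by (apply pow_lt; lra). nra. }
  set (ell := fun k t => Rmax 0 (Rmin t (Bk k) - ak k)).
  set (PS := fun n t => sum_f_R0 (fun k => ell k t) n).
  assert (ell_nn: forall k t, 0 <= ell k t) by (intros; apply Rmax_l).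
  assert (ell_mono: forall k t s, t <= s -> ell k t <= ell k s).
  { intros k t s Hts. unfold ell, Rmax, Rmin. repeat destruct Rle_dec; lra. }
  assert (ell_le: forall k t, ell k t <= Bk k - ak k).
  { intros k t. pose proof (Bpos k). pose proof (Hab' k). unfold ell, Rmax, Rmin. repeat destruct Rle_dec; lra. }
  assert (ell_slope: forall k t s, ak k <= t -> t <= s -> s <= Bk k -> ell k s - ell k t = s - t).
  { intros k t s H1 H2 H3. unfold ell, Rmax, Rmin. repeat destruct Rle_dec; lra. }
  assert (PS_nn: forall n t, 0 <= PS n t) by (intros; apply cond_pos_sum; auto).
  assert (PS_mono: forall n t s, t <= s -> PS n t <= PS n s).
  { intros n t s H. apply sum_Rle. intros; auto. }
  assert (PS_diff: forall n k t s, t <= s -> (k <= n)%nat -> ell k s - ell k t <= PS n s - PS n t).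
  { intros n k t s H Hk. unfold PS. rewrite <- minus_sum.
    apply (le_sum (fun j => ell j s - ell j t)); auto. intro j. pose proof (ell_mono j t s H). lra. }
  assert (PS_bound: forall n t, PS n t <= 2 * eps).
  { intros n t. eapply Rle_trans. apply (sum_Rle _ (fun k => Bk k - ak k)). intros; apply ell_le.
    assert (E1: sum_f_R0 (fun k => Bk k - ak k) n = sum_f_R0 (fun k => bk k - ak k) n +
                eps * sum_f_R0 (fun k => (/2)^(S k)) n).
    { unfold Bk. induction n; [simpl; ring|]. rewrite !tech5, IHn. ring. }
    rewrite E1, geom. specialize (Hsum n). assert (0 < (/2)^(S n)) by (apply pow_lt; lra). nra. }
  set (S := fun t => forall eta, 0 < eta -> exists n0, forall n, (n0 <= n)%nat ->
        g t - g a <= eps * (t - a) + L * PS n t + eta).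
  assert (Sb: S b).
  { apply real_ind with a; auto.
    - intros eta Heta. exists 0%nat. intros n _. pose proof (PS_nn n a). nra.
    - intros t Ht St. destruct (classic (N t)) as [Nt|Nt].
      + destruct (Hcov t Nt) as [k Hk]. pose proof (Bpos k).
        exists (Bk k - t). split; [lra|]. intros s Hs Hsb eta Heta.
        destruct (St eta Heta) as [n0 Hn0]. exists (Nat.max n0 k). intros n Hn.
        specialize (Hn0 n ltac:(lia)).
        pose proof (Hlip s t ltac:(lra) ltac:(lra)) as Hl.
        rewrite (Rabs_right (s - t)) in Hl by lra. pose proof (Rle_abs (g s - g t)).
        pose proof (ell_slope k t s ltac:(lra) ltac:(lra) ltac:(lra)).
        pose proof (PS_diff n k t s ltac:(lra) ltac:(lia)).
        assert (L * (s - t) <= L * (PS n s - PS n t)) by (apply Rmult_le_compat_l; lra).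
        nra.
      + destruct (Hder t ltac:(lra) Nt) as [d [Hd Hd0]].
        destruct (Hd eps Heps) as [del Hdel].
        exists (del / 2). split; [destruct del; simpl; lra|]. intros s Hs Hsb eta Heta.
        assert (Hgs: g s - g t <= eps * (s - t)).
        { specialize (Hdel (s - t) ltac:(lra)).
          rewrite Rabs_right in Hdel by lra. destruct del as [del Hdp]; simpl in *.
          specialize (Hdel ltac:(lra)). replace (t + (s - t)) with s in Hdel by ring.
          pose proof (Rle_abs ((g s - g t) / (s - t) - d)).
          assert (Hq: (g s - g t) / (s - t) <= eps) by lra.
          replace (g s - g t) with ((g s - g t) / (s - t) * (s - t)) by (field; lra).
          apply Rmult_le_compat_r; lra. }
        destruct (St eta Heta) as [n0 Hn0]. exists n0. intros n Hn.
        specialize (Hn0 n Hn). pose proof (PS_mono n t s ltac:(lra)).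
        assert (L * PS n t <= L * PS n s) by (apply Rmult_le_compat_l; lra). nra.
    - intros c Hc Hbelow eta Heta.
      set (q := eta / (2 * (L + 1))).
      assert (Hq: q * (L + 1) = eta / 2) by (unfold q; field; lra).
      assert (Hq0: 0 < q) by (unfold q; apply Rdiv_lt_0_compat; lra).
      set (s0 := Rmax a (c - q)).
      assert (T1: a <= s0) by apply Rmax_l.
      assert (T2: c - q <= s0) by apply Rmax_r.
      assert (T3: s0 < c) by (unfold s0, Rmax; destruct Rle_dec; lra).
      destruct (Hbelow s0 ltac:(lra) (eta/2) ltac:(lra)) as [n0 Hn0].
      exists n0. intros n Hn. specialize (Hn0 n Hn).
      pose proof (Hlip c s0 ltac:(lra) ltac:(lra)) as Hl.
      rewrite (Rabs_right (c - s0)) in Hl by lra. pose proof (Rle_abs (g c - g s0)).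
      pose proof (PS_mono n s0 c ltac:(lra)).
      assert (L * PS n s0 <= L * PS n c) by (apply Rmult_le_compat_l; lra).
      assert (L * (c - s0) <= L * q) by (apply Rmult_le_compat_l; lra).
      nra. }
  destruct (Sb eps Heps) as [n0 Hn0]. specialize (Hn0 n0 (le_n _)).
  pose proof (PS_bound n0 b). nra.
Qed.

Lemma mono (I : R -> Prop) g a b N : a <= b -> (forall x, a <= x <= b -> I x) ->
  sloclip I g -> null1 N ->
  (forall t, a <= t <= b -> ~ N t -> exists d, derivable_pt_lim g t d /\ d <= 0) ->
  g b <= g a.
Proof.
  intros Hab HI Hg HN Hd.
  destruct (unif_lip I g a b Hab HI Hg) as [L [HL Hl]].
  assert (g b - g a <= 0); [|lra].
  apply (eps_conclude _ _ (b - a + 2 * L + 1)); [lra|].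
  intros e He. pose proof (mono_core g a b L N Hab HL Hl HN Hd e He). nra.
Qed.


Definition lin (r b : R) (x : V4) : R := cE x + r * cF x + b * cM x + cMs x.

Lemma sq_le_norm (c : R) x : c ^ 2 <= cE x ^ 2 + cM x ^ 2 + cF x ^ 2 + cMs x ^ 2 -> Rabs c <= vnorm x.
Proof. intro H. unfold vnorm. rewrite <- sqrt_Rsqr_abs. apply sqrt_le_1_alt. unfold Rsqr. simpl in *. lra. Qed.

Lemma comps_le_norm x : Rabs (cE x) <= vnorm x /\ Rabs (cM x) <= vnorm x /\
  Rabs (cF x) <= vnorm x /\ Rabs (cMs x) <= vnorm x.
Proof.
  pose proof (pow2_ge_0 (cE x)). pose proof (pow2_ge_0 (cM x)).
  pose proof (pow2_ge_0 (cF x)). pose proof (pow2_ge_0 (cMs x)).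
  repeat split; apply sq_le_norm; lra.
Qed.

Lemma lin_bound r b x : 0 <= r -> 0 <= b -> Rabs (lin r b x) <= (2 + r + b) * vnorm x.
Proof.
  intros Hr Hb. destruct (comps_le_norm x) as [h1 [h2 [h3 h4]]].
  pose proof (Rle_abs (cE x)). pose proof (Rle_abs (cM x)). pose proof (Rle_abs (cF x)). pose proof (Rle_abs (cMs x)).
  pose proof (Rle_abs (- cE x)). pose proof (Rle_abs (- cM x)). pose proof (Rle_abs (- cF x)). pose proof (Rle_abs (- cMs x)).
  rewrite !Rabs_Ropp in *.
  assert (r * cF x <= r * vnorm x) by (apply Rmult_le_compat_l; lra).
  assert (r * - cF x <= r * vnorm x) by (apply Rmult_le_compat_l; lra).
  assert (b * cM x <= b * vnorm x) by (apply Rmult_le_compat_l; lra).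
  assert (b * - cM x <= b * vnorm x) by (apply Rmult_le_compat_l; lra).
  apply Rabs_le. unfold lin. split; nra.
Qed.

Lemma lin_sub r b x y : lin r b (vsub x y) = lin r b x - lin r b y.
Proof. unfold lin, vsub, vadd, vscale; simpl; ring. Qed.

Lemma lin_conv r b x y t : lin r b (vadd (vscale t x) (vscale (1 - t) y)) = t * lin r b x + (1 - t) * lin r b y.
Proof. unfold lin, vadd, vscale; simpl; ring. Qed.

Lemma vnorm_sub0 x : vnorm (vsub x vzero) = vnorm x.
Proof. unfold vnorm, vsub, vadd, vscale, vzero; simpl. f_equal. ring. Qed.

Lemma vnorm_le_lin r b m x : Dp x -> 0 < m -> m <= 1 -> m <= r -> m <= b ->
  m * vnorm x <= lin r b x.
Proof.
  intros [h1 [h2 [h3 h4]]] Hm H1 Hr Hb.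
  assert (vnorm x <= cE x + cM x + cF x + cMs x).
  { unfold vnorm. rewrite <- (sqrt_pow2 (cE x + cM x + cF x + cMs x)) by lra.
    apply sqrt_le_1_alt. nra. }
  unfold lin.
  assert (m * vnorm x <= m * (cE x + cM x + cF x + cMs x)) by (apply Rmult_le_compat_l; lra).
  nra.
Qed.

Lemma null_empty : null4 (fun _ => False).
Proof.
  intros eps Heps. exists (fun _ => vzero), (fun _ => vzero). split; [|split].
  - intros k; simpl; repeat split; lra.
  - intros x [].
  - intros n. assert (sum_f_R0 (fun k => box_vol vzero vzero) n = 0).
    { induction n; [unfold box_vol; simpl; ring|]. rewrite tech5, IHn. unfold box_vol; simpl; ring. }
    lra.
Qed.

Lemma fil_ineq (X : V4 -> V4) r b mu : 0 <= r -> 0 <= b -> 0 <= mu ->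
  (forall y, Dp y -> lin r b (X y) <= - mu * lin r b y) ->
  forall z v, filippov_set X z v -> lin r b v <= - mu * lin r b z.
Proof.
  intros Hr Hb Hmu HX z v Hf.
  set (c := 2 + r + b).
  apply (eps_conclude _ _ (mu * c)); [unfold c; nra|].
  intros e He.
  apply (Hf e He (fun _ => False) null_empty (fun w => lin r b w <= - mu * lin r b z + mu * c * e)).
  - intros x Hx. apply (eps_conclude _ _ c); [unfold c; lra|].
    intros e' He'. destruct (Hx e' He') as [y [Cy Hy]].
    pose proof (lin_bound r b (vsub y x) Hr Hb). rewrite lin_sub in H.
    pose proof (Rle_abs (lin r b x - lin r b y)). rewrite Rabs_minus_sym in H0.
    assert (c * vnorm (vsub y x) <= c * e') by (apply Rmult_le_compat_l; unfold c; lra).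
    fold c in H. cbv beta in *. lra.
  - intros x y t Cx Cy Ht. cbv beta in *. rewrite lin_conv.
    assert (t * lin r b x <= t * (- mu * lin r b z + mu * c * e)) by (apply Rmult_le_compat_l; lra).
    assert ((1 - t) * lin r b y <= (1 - t) * (- mu * lin r b z + mu * c * e)) by (apply Rmult_le_compat_l; lra).
    nra.
  - intros w [y [Dy [Hy [_ ->]]]]. cbv beta.
    specialize (HX y Dy).
    pose proof (lin_bound r b (vsub y z) Hr Hb). rewrite lin_sub in H.
    pose proof (Rle_abs (- (lin r b y - lin r b z))). rewrite Rabs_Ropp in H0.
    assert (c * vnorm (vsub y z) <= c * e) by (apply Rmult_le_compat_l; unfold c; lra).
    fold c in H.
    assert (mu * (lin r b z - lin r b y) <= mu * (c * e)) by (apply Rmult_le_compat_l; lra).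
    nra.
Qed.

Lemma Rdiv_le_0_compat x y : 0 <= x -> 0 < y -> 0 <= x / y.
Proof. intros. unfold Rdiv. apply Rmult_le_pos; [lra| left; apply Rinv_0_lt_compat; lra]. Qed.

Lemma pointwise (betaE nuE deltaE deltaM deltaF deltaS K nu gammaS : R) :
  0 < betaE -> 0 < nuE -> 0 < deltaE -> 0 < deltaM -> 0 < deltaF ->
  0 < deltaS -> 0 < K -> 0 < nu < 1 -> 0 < gammaS <= 1 ->
  R0_basic betaE nuE deltaE deltaF nu < 1 ->
  exists r b mu, 0 < r /\ 0 < b /\ 0 < mu /\
   forall y, Dp y -> lin r b (Xfield betaE nuE deltaE deltaM deltaF deltaS K nu gammaS (fun _ => 0) y)
                    <= - mu * lin r b y.
Proof.
  intros HbE HnE HdE HdM HdF HdS HK Hnu Hg HR.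
  set (a := nuE + deltaE). set (P := nu * nuE).
  assert (HP: 0 < P) by (unfold P; nra).
  assert (Ha: 0 < a) by (unfold a; lra).
  assert (HR': betaE * P < deltaF * a).
  { unfold R0_basic in HR. fold a in HR.
    assert (E1: betaE * nu * nuE = betaE * nu * nuE / (deltaF * a) * (deltaF * a)) by (field; lra).
    assert (0 < deltaF * a) by nra. unfold P. nra. }
  set (r := (betaE * P + deltaF * a) / (2 * deltaF * P)).
  assert (Er: r * (2 * deltaF * P) = betaE * P + deltaF * a) by (unfold r; field; lra).
  assert (Hr0: 0 < r) by (unfold r; apply Rdiv_lt_0_compat; nra).
  assert (Hr1: betaE < r * deltaF).
  { destruct (Rlt_le_dec betaE (r * deltaF)) as [h|h]; auto. exfalso.
    assert (r * deltaF * (2 * P) <= betaE * (2 * P)) by (apply Rmult_le_compat_r; lra). nra. }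
  assert (Hr2: r * P < a).
  { destruct (Rlt_le_dec (r * P) a) as [h|h]; auto. exfalso.
    assert (a * (2 * deltaF) <= r * P * (2 * deltaF)) by (apply Rmult_le_compat_r; lra). nra. }
  set (b := (a - r * P) / (2 * nuE)).
  assert (Eb: b * nuE = (a - r * P) / 2) by (unfold b; field; lra).
  assert (Hb0: 0 < b) by (unfold b; apply Rdiv_lt_0_compat; lra).
  set (mu := Rmin (Rmin ((a - r * P) / 2) ((r * deltaF - betaE) / r)) (Rmin deltaM deltaS)).
  assert (M1: mu <= (a - r * P) / 2) by (unfold mu; eapply Rle_trans; [apply Rmin_l|apply Rmin_l]).
  assert (M2: mu <= (r * deltaF - betaE) / r) by (unfold mu; eapply Rle_trans; [apply Rmin_l|apply Rmin_r]).
  assert (M3: mu <= deltaM) by (unfold mu; eapply Rle_trans; [apply Rmin_r|apply Rmin_l]).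
  assert (M4: mu <= deltaS) by (unfold mu; eapply Rle_trans; [apply Rmin_r|apply Rmin_r]).
  assert (Hmu: 0 < mu).
  { unfold mu. assert (0 < (r * deltaF - betaE) / r) by (apply Rdiv_lt_0_compat; lra).
    unfold Rmin; repeat destruct Rle_dec; lra. }
  assert (M2': mu * r <= r * deltaF - betaE).
  { replace (r * deltaF - betaE) with ((r * deltaF - betaE) / r * r) by (field; lra).
    apply Rmult_le_compat_r; lra. }
  exists r, b, mu. split; [lra|]. split; [lra|]. split; [lra|].
  intros y [hE [hM [hF hMs]]].
  unfold lin, Xfield. simpl.
  set (E := cE y) in *. set (M := cM y) in *. set (F := cF y) in *. set (Ms := cMs y) in *.
  set (rho := M / (M + gammaS * Ms)).
  assert (Hrho: 0 <= rho <= 1).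
  { unfold rho. destruct (Req_dec (M + gammaS * Ms) 0) as [e|e].
    - rewrite e. unfold Rdiv. rewrite Rinv_0. lra.
    - assert (0 < M + gammaS * Ms) by nra. split.
      + apply Rdiv_le_0_compat; lra.
      + apply (Rmult_le_reg_r (M + gammaS * Ms)); auto. unfold Rdiv. rewrite Rmult_assoc, Rinv_l by lra. nra. }
  assert (A1: betaE * F * (1 - E / K) <= betaE * F).
  { assert (0 <= E / K) by (apply Rdiv_le_0_compat; lra).
    assert (0 <= betaE * F) by nra. nra. }
  assert (A2: r * (nu * nuE * E * rho) <= r * (P * E)).
  { unfold P. assert (0 <= r * (nu * nuE * E)) by (apply Rmult_le_pos; [lra|]; apply Rmult_le_pos; [apply Rmult_le_pos|]; lra).
    replace (r * (nu * nuE * E * rho)) with (r * (nu * nuE * E) * rho) by ring.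
    nra. }
  assert (A3: b * ((1 - nu) * nuE * E) <= (a - r * P) / 2 * E).
  { rewrite <- Eb. assert (0 <= b * nuE * E) by nra. nra. }
  assert (B1: mu * E <= (a - r * P) / 2 * E) by (apply Rmult_le_compat_r; lra).
  assert (B2: mu * r * F <= (r * deltaF - betaE) * F) by (apply Rmult_le_compat_r; lra).
  assert (B3: mu * b * M <= deltaM * b * M).
  { assert (0 <= b * M) by nra. nra. }
  assert (B4: mu * Ms <= deltaS * Ms) by (apply Rmult_le_compat_r; lra).
  fold a. unfold P in *. nra.
Qed.


Lemma sol_props (X : V4 -> V4) r b mu I z : 0 <= r -> 0 <= b -> 0 <= mu ->
  (forall y, Dp y -> lin r b (X y) <= - mu * lin r b y) ->
  filippov_solution X I z ->
  sloclip I (fun t => lin r b (z t)) /\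
  (exists N, null1 N /\ forall t, I t -> ~ N t ->
      exists d, derivable_pt_lim (fun t => lin r b (z t)) t d /\ d <= - mu * lin r b (z t)) /\
  (forall t, I t -> 0 <= lin r b (z t)).
Proof.
  intros Hr Hb Hmu HX [Hint [HD [Hlip [N [HN Hder]]]]].
  split; [|split].
  - intros t It. destruct (Hlip t It) as [d [L [Hd HL]]]. exists d, ((2 + r + b) * L). split; auto.
    intros s s' Is Is' H1 H2. specialize (HL s s' Is Is' H1 H2).
    rewrite <- lin_sub. eapply Rle_trans. apply lin_bound; auto.
    rewrite Rmult_assoc. apply Rmult_le_compat_l; [lra|auto].
  - exists N. split; auto. intros t It Nt. destruct (Hder t It Nt) as [v [[HE [HM [HF HMs]]] Hf]].
    exists (lin r b v). split.
    + pose proof (derivable_pt_lim_plus _ _ _ _ _ HE (derivable_pt_lim_scal _ r _ _ HF)) as H1.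
      pose proof (derivable_pt_lim_plus _ _ _ _ _ H1 (derivable_pt_lim_scal _ b _ _ HM)) as H2.
      pose proof (derivable_pt_lim_plus _ _ _ _ _ H2 HMs) as H3.
      exact H3.
    + apply (fil_ineq X r b mu Hr Hb Hmu HX (z t) v Hf).
  - intros t It. destruct (HD t It) as [h1 [h2 [h3 h4]]]. unfold lin. nra.
Qed.

Lemma w_mono I w N mu : is_interval I -> sloclip I w -> null1 N -> 0 <= mu ->
  (forall t, I t -> ~ N t -> exists d, derivable_pt_lim w t d /\ d <= - mu * w t) ->
  (forall t, I t -> 0 <= w t) ->
  forall a b, I a -> I b -> a <= b -> w b <= w a.
Proof.
  intros Hint Hw HN Hmu Hd Hpos a b Ia Ib Hab.
  apply (mono I w a b N Hab); auto.
  - intros x Hx. apply (Hint a x b); auto.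
  - intros t Ht Nt. assert (It: I t) by (apply (Hint a t b); auto).
    destruct (Hd t It Nt) as [d [H1 H2]]. exists d. split; auto.
    pose proof (Hpos t It). nra.
Qed.

Lemma w_decay I w N mu : is_interval I -> sloclip I w -> null1 N -> 0 < mu ->
  (forall t, I t -> ~ N t -> exists d, derivable_pt_lim w t d /\ d <= - mu * w t) ->
  (forall t, I t -> 0 <= w t) ->
  forall a t c, I a -> I t -> 0 < c -> mu * c * (t - a) > w a -> w t < c.
Proof.
  intros Hint Hw HN Hmu Hd Hpos a t c Ia It Hc Hta.
  destruct (Rlt_le_dec (w t) c) as [h|h]; auto. exfalso.
  assert (Hat: a <= t).
  { destruct (Rle_dec a t) as [h'|h']; auto. pose proof (Hpos a Ia). assert (0 < mu * c) by nra. nra. }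
  pose proof (w_mono I w N mu Hint Hw HN ltac:(lra) Hd Hpos) as Wm.
  set (g := fun s => w s + mu * c * s).
  assert (g t <= g a).
  { apply (mono I g a t N Hat); auto.
    - intros x Hx. apply (Hint a x t); auto.
    - intros s Is. destruct (Hw s Is) as [d [L [Hd0 HL]]]. exists d, (L + mu * c). split; auto.
      intros x y Ix Iy H1 H2. specialize (HL x y Ix Iy H1 H2). unfold g.
      replace (w x + mu * c * x - (w y + mu * c * y)) with ((w x - w y) + mu * c * (x - y)) by ring.
      eapply Rle_trans. apply Rabs_triang. rewrite Rabs_mult, (Rabs_right (mu * c)) by nra. nra.
    - intros s Hs Ns. assert (Is: I s) by (apply (Hint a s t); auto; lra).
      destruct (Hd s Is Ns) as [d [H1 H2]].
      exists (d + mu * c * 1). split.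
      + apply (derivable_pt_lim_plus _ _ _ _ _ H1 (derivable_pt_lim_scal _ (mu * c) _ _ (derivable_pt_lim_id s))).
      + assert (w t <= w s) by (apply Wm; auto; lra).
        assert (mu * c <= mu * w s) by (apply Rmult_le_compat_l; lra). lra. }
  unfold g in H. nra.
Qed.


Theorem theorem2 (betaE nuE deltaE deltaM deltaF deltaS K nu gammaS : R) :
  0 < betaE -> 0 < nuE -> 0 < deltaE -> 0 < deltaM -> 0 < deltaF ->
  0 < deltaS -> 0 < K -> 0 < nu < 1 -> 0 < gammaS <= 1 -> deltaM <= deltaS ->
  R0_basic betaE nuE deltaE deltaF nu < 1 ->
  GAS_in (Xfield betaE nuE deltaE deltaM deltaF deltaS K nu gammaS (fun _ => 0))
         Dp vzero.
Proof.
  intros HbE HnE HdE HdM HdF HdS HK Hnu Hg HdMS HR.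
  destruct (pointwise betaE nuE deltaE deltaM deltaF deltaS K nu gammaS HbE HnE HdE HdM HdF HdS HK Hnu Hg HR)
    as [r [b [mu [Hr [Hb [Hmu HX]]]]]].
  set (X := Xfield betaE nuE deltaE deltaM deltaF deltaS K nu gammaS (fun _ => 0)) in *.
  set (m := Rmin (Rmin 1 r) b).
  assert (m1: m <= 1) by (unfold m; eapply Rle_trans; [apply Rmin_l|apply Rmin_l]).
  assert (m2: m <= r) by (unfold m; eapply Rle_trans; [apply Rmin_l|apply Rmin_r]).
  assert (m3: m <= b) by (unfold m; apply Rmin_r).
  assert (m0: 0 < m) by (unfold m, Rmin; repeat destruct Rle_dec; lra).
  set (C := 2 + r + b).
  assert (HC: 0 < C) by (unfold C; lra).
  split.
  - intros eps Heps. exists (eps * m / C). split.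
    { apply Rdiv_lt_0_compat; nra. }
    intros I z Hsol I0 D0 Hn t It Ht.
    destruct (sol_props X r b mu I z ltac:(lra) ltac:(lra) ltac:(lra) HX Hsol) as [Hw [[N [HN Hd]] Hpos]].
    destruct Hsol as [Hint [HD _]].
    pose proof (w_mono I _ N mu Hint Hw HN ltac:(lra) Hd Hpos 0 t I0 It ltac:(lra)) as Wm.
    cbv beta in Wm.
    rewrite vnorm_sub0 in *.
    pose proof (lin_bound r b (z 0) ltac:(lra) ltac:(lra)). fold C in H.
    pose proof (Rle_abs (lin r b (z 0))).
    pose proof (vnorm_le_lin r b m (z t) (HD t It) m0 m1 m2 m3).
    assert (C * vnorm (z 0) < C * (eps * m / C)) by (apply Rmult_lt_compat_l; lra).
    replace (C * (eps * m / C)) with (eps * m) in H2 by (field; lra).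
    assert (m * vnorm (z t) < m * eps) by lra.
    apply (Rmult_lt_reg_l m); lra.
  - intros I z Hsol HI D0 eps Heps.
    destruct (sol_props X r b mu I z ltac:(lra) ltac:(lra) ltac:(lra) HX Hsol) as [Hw [[N [HN Hd]] Hpos]].
    destruct Hsol as [Hint [HD _]].
    set (c := eps * m).
    assert (Hc: 0 < c) by (unfold c; nra).
    assert (Hmc: 0 < mu * c) by nra.
    set (w0 := lin r b (z 0)).
    assert (Hw0: 0 <= w0) by (apply Hpos; apply HI; lra).
    exists (w0 / (mu * c) + 1). intros t Ht.
    assert (0 <= w0 / (mu * c)) by (apply Rdiv_le_0_compat; lra).
    assert (It: I t) by (apply HI; lra).
    assert (Ewc: w0 / (mu * c) * (mu * c) = w0) by (field; lra).
    assert (mu * c * (t - 0) > lin r b (z 0)).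
    { fold w0. assert (mu * c * (w0 / (mu * c) + 1) <= mu * c * t) by (apply Rmult_le_compat_l; lra).
      nra. }
    pose proof (w_decay I _ N mu Hint Hw HN Hmu Hd Hpos 0 t c ltac:(apply HI; lra) It Hc H0) as Wd.
    cbv beta in Wd. rewrite vnorm_sub0.
    pose proof (vnorm_le_lin r b m (z t) (HD t It) m0 m1 m2 m3).
    apply (Rmult_lt_reg_l m); [lra|]. unfold c in Wd. lra.
Qed.
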